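(* Let $\mathcal{S} = s_1, s_2, \dots$ be the integer sequence in which $s_i$ is the position of the lowest-order $1$ bit in the binary representation of $i$ (i.e. $s_i = 1 + \nu_2(i)$, where $\nu_2(i)$ is the exponent of $2$ in $i$). Then for all integers $k, r > 0$, \[ \sum_{i=1}^{k} s_i \leq \sum_{i=r}^{r+k-1} s_i . \] That is, the prefix of length $k$ of $\mathcal{S}$ has the smallest sum among all contiguous subsequences of length $k$ of $\mathcal{S}$.
   Context: The sequence $\mathcal{S}$ (the ''ruler function'') begins $1,2,1,3,1,2,1,4,1,2,1,3,1,2,1,5,\dots$; $s_i$ is the number of bits that must be counted from right to left to reach the first $1$ in the binary representation of $i$. *)

(* Defs.v *)
From mathcomp Require Import all_boot.

Definition ruler (i : nat) : nat := (logn 2 i).+1.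

(* Main.v *)
Require Import Defs.
From mathcomp Require Import all_boot.
From mathcomp Require Import zify.

Lemma aux (q k : nat) :
  \sum_(q.+1 <= i < q.+1 + k) ruler i = k + logn 2 ((q + k) ^_ k).
Proof.
elim: k => [|k IH].
  by rewrite addn0 big_geq // ffactn0 logn1.
rewrite addnS big_nat_recr ?leq_addr // IH /ruler addnS ffactSS.
rewrite lognM // ?ffact_gt0 ?leq_addl //.
rewrite /= addSn -addnS; lia.
Qed.

Theorem lemma1 (k r : nat) (hk : 0 < k) (hr : 0 < r) :
  \sum_(1 <= i < k.+1) ruler i <= \sum_(r <= i < r + k) ruler i.
Proof.
case: r hr => [//|q] _.
have := aux 0 k; rewrite add1n add0n => ->.
rewrite aux leq_add2l ffactnn.
apply: dvdn_leq_log; first by rewrite ffact_gt0 leq_addl.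
by rewrite -bin_ffact dvdn_mull.
Qed.
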